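(* (i) For all $n,k\in\mathbb N$, $\binom{n}{k}=l_{n,k}+2l_{n,k+1}$. (ii) For all $n\in\mathbb N$, the polynomial identity $x^n=(-1)^n+(x+1)\sum_{k=1}^nl_{n,k}(x-1)^{k-1}$ holds.
   Context: For $i,j\in\mathbb N$, $l_{i,j}=\sum_{k=0}^{i-j}\binom{\frac{i-1}{2}+y-k}{k}\binom{\frac{i-1}{2}+k-y}{i-j-k}$, where $\binom{z}{k}=\frac{z(z-1)\cdots(z-k+1)}{k!}$; this sum is a polynomial in the auxiliary variable $y$ which is constant in $y$, so $l_{i,j}$ is a well-defined number (e.g. its value at $y=0$). In particular $l_{i,j}=0$ for $j>i$ (empty sum). These numbers form a Pascal-like triangle starting with rows $1$; $-1,1$; $1,0,1$; $-1,1,1,1$; $1,0,2,2,1$. *)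

(* Defs.v *)
From mathcomp Require Import all_boot all_order all_algebra.
Set Implicit Arguments. Unset Strict Implicit. Unset Printing Implicit Defensive.
Import Order.TTheory GRing.Theory Num.Theory.
Local Open Scope ring_scope.

Definition gbinom (z : rat) (k : nat) : rat :=
  (\prod_(i < k) (z - i%:R)) / (k`!)%:R.

Definition lsum (i j : nat) (y : rat) : rat :=
  if (j <= i)%N then
    \sum_(k < (i - j).+1)
      gbinom ((i%:R - 1) / 2 + y - k%:R) k *
      gbinom ((i%:R - 1) / 2 + k%:R - y) (i - j - k)
  else 0.

(* l_{i,j}: the (y-independent) value, taken at y = 0. *)
Definition l (i j : nat) : rat := lsum i j 0.

(* Main.v *)
Require Import Defs.
From mathcomp Require Import all_boot all_order all_algebra.
From mathcomp Require Import ring lra zify.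
Import GRing.Theory Num.Theory.
Local Open Scope ring_scope.


Ltac posk k := have ? := ler0n rat k; apply/lt0r_neq0; lra.

Lemma gbinom0 z : gbinom z 0 = 1.
Proof. by rewrite /gbinom big_ord0 fact0 divr1. Qed.

Lemma gbinom1 z : gbinom z 1 = z.
Proof. by rewrite /gbinom big_ord1 divr1 subr0. Qed.

Lemma gbinomS z k : gbinom z k.+1 = gbinom z k * (z - k%:R) / k.+1%:R.
Proof.
rewrite /gbinom big_ord_recr /= factS natrM.
have h1 : (k.+1%:R : rat) != 0 by rewrite pnatr_eq0.
have h2 : ((k`!)%:R : rat) != 0 by rewrite pnatr_eq0 -lt0n fact_gt0.
field; rewrite ?nat1r ?natr1 ?h1 ?h2 ?andbT //=.
Qed.

Lemma gbinom_pascal z k : gbinom (z + 1) k.+1 = gbinom z k.+1 + gbinom z k.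
Proof.
elim: k z => [|k IH] z.
  by rewrite !gbinomS !gbinom0; field.
rewrite gbinomS IH gbinomS [gbinom z k.+2]gbinomS [gbinom z k.+1]gbinomS.
have h1 : (k.+1%:R : rat) != 0 by rewrite pnatr_eq0.
have h2 : (k.+2%:R : rat) != 0 by rewrite pnatr_eq0.
field; rewrite ?nat1r ?natr1 ?h1 ?h2 ?andbT //=; posk k.
Qed.

Lemma gbinom_nat n k : gbinom n%:R k = ('C(n, k))%:R.
Proof.
elim: n k => [|n IH] k.
  case: k => [|k]; first by rewrite gbinom0 bin0.
  rewrite /gbinom big_ord_recl /= subr0 mul0r mul0r bin0n //.
case: k => [|k]; first by rewrite gbinom0 bin0.
by rewrite -natr1 gbinom_pascal !IH binS natrD.
Qed.

Lemma gbinomN1 k : gbinom (-1) k = (-1) ^+ k.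
Proof.
elim: k => [|k IH]; first by rewrite gbinom0.
rewrite gbinomS IH exprS.
have h1 : (k.+1%:R : rat) != 0 by rewrite pnatr_eq0.
field; rewrite ?nat1r ?natr1 ?h1 ?andbT //=.
Qed.

Definition S (A B : rat) (N : nat) : rat :=
  \sum_(m < N.+1) gbinom (A - m%:R) m * gbinom (B + m%:R) (N - m).

Lemma R1 A B N : S A (B + 1) N.+1 = S A B N.+1 + S A B N.
Proof.
rewrite /S big_ord_recr [X in _ = X + _]big_ord_recr /= subnn !gbinom0.
rewrite addrAC -big_split /=; congr (_ + _); apply: eq_bigr => i _.
rewrite subSn; last by rewrite -ltnS.
have -> : B + 1 + i%:R = (B + i%:R) + 1 by rewrite addrAC.
by rewrite gbinom_pascal mulrDr.
Qed.

Lemma R2 A B N : S (A + 1) B N.+1 = S A B N.+1 + S (A - 1) (B + 1) N.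
Proof.
rewrite /S big_ord_recl [X in _ = X + _]big_ord_recl /= !subr0 !gbinom0.
rewrite -addrA; congr (_ + _); rewrite -big_split /=; apply: eq_bigr => i _.
rewrite /bump /= !add1n subSS.
have -> : A + 1 - i.+1%:R = (A - i.+1%:R) + 1 by rewrite addrAC.
have -> : A - 1 - i%:R = A - i.+1%:R by rewrite -natr1; ring.
have -> : B + 1 + i%:R = B + i.+1%:R by rewrite -natr1; ring.
by rewrite gbinom_pascal mulrDl.
Qed.

Definition pf (f : rat -> rat) := exists p : {poly rat}, forall x, f x = p.[x].

Lemma pf_cst c : pf (fun _ => c).
Proof. by exists c%:P => x; rewrite hornerC. Qed.
Lemma pf_id : pf (fun x => x).
Proof. by exists 'X => x; rewrite hornerX. Qed.
Lemma pf_add f g : pf f -> pf g -> pf (fun x => f x + g x).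
Proof. by move=> [p Hp] [q Hq]; exists (p + q) => x; rewrite hornerD Hp Hq. Qed.
Lemma pf_mul f g : pf f -> pf g -> pf (fun x => f x * g x).
Proof. by move=> [p Hp] [q Hq]; exists (p * q) => x; rewrite hornerM Hp Hq. Qed.
Lemma pf_sum n (F : nat -> rat -> rat) :
  (forall i, pf (F i)) -> pf (fun x => \sum_(i < n) F i x).
Proof.
move=> HF; elim: n => [|n IH].
  by exists 0 => x; rewrite big_ord0 horner0.
have := pf_add _ _ IH (HF n) => -[p Hp]; exists p => x.
by rewrite big_ord_recr /= Hp.
Qed.
Lemma pf_prod n (F : nat -> rat -> rat) :
  (forall i, pf (F i)) -> pf (fun x => \prod_(i < n) F i x).
Proof.
move=> HF; elim: n => [|n IH].
  by exists 1 => x; rewrite big_ord0 hornerC.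
have := pf_mul _ _ IH (HF n) => -[p Hp]; exists p => x.
by rewrite big_ord_recr /= Hp.
Qed.
Lemma pf_gbinom g k : pf g -> pf (fun x => gbinom (g x) k).
Proof.
move=> Hg; rewrite /gbinom.
apply: pf_mul; last exact: pf_cst.
apply: (pf_prod _ (fun i x => g x - i%:R)) => i.
by apply: pf_add => //; apply: pf_cst.
Qed.

Lemma pf_periodic f : pf f -> (forall x, f (x + 1) = f x) -> forall x y, f x = f y.
Proof.
move=> [p Hp] Hper x y.
have Hk : forall k : nat, f (y + k%:R) = f y.
  elim=> [|k IH]; first by rewrite addr0.
  by rewrite -natr1 addrA Hper.
set q := p - (p.[y])%:P.
have q0 : q = 0.
  apply/eqP; apply/negPn/negP => qn0.
  have := max_poly_roots (rs := [seq y + i%:R | i <- iota 0 (size q)]) qn0.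
  rewrite size_map size_iota ltnn => H; suff : false by []; apply: H.
    apply/allP => z /mapP [i _ ->].
    by rewrite /root /q hornerD hornerN hornerC -!Hp Hk subrr.
  rewrite map_inj_uniq ?iota_uniq // => i j /addrI /eqP.
  by rewrite eqr_nat => /eqP.
have : q.[x] = 0 by rewrite q0 horner0.
by rewrite /q hornerD hornerN hornerC -!Hp => /eqP; rewrite subr_eq0 => /eqP ->.
Qed.
Lemma pf_opp f : pf f -> pf (fun x => - f x).
Proof. by move=> [p Hp]; exists (- p) => x; rewrite hornerN Hp. Qed.

Lemma pfS_A y M : pf (fun x => S x y M).
Proof.
apply: (pf_sum _ (fun i x => gbinom (x - i%:R) i * gbinom (y + i%:R) (M - i))) => i.
apply: pf_mul; last exact: pf_cst.
by apply: pf_gbinom; apply: pf_add; [exact: pf_id | exact: pf_cst].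
Qed.

Lemma pfS_B x M : pf (fun y => S x y M).
Proof.
apply: (pf_sum _ (fun i y => gbinom (x - i%:R) i * gbinom (y + i%:R) (M - i))) => i.
apply: pf_mul; first exact: pf_cst.
by apply: pf_gbinom; apply: pf_add; [exact: pf_id | exact: pf_cst].
Qed.

Lemma binCC a b : ('C(a, b) * 'C(b, a) = (a == b))%N.
Proof.
case: (ltngtP a b) => h.
- by rewrite bin_small.
- by rewrite [X in (_ * X)%N]bin_small // muln0.
- by rewrite h binn.
Qed.

Lemma sum_half N :
  \sum_(i < N.+2) ((N.+1 - i == i)%N%:R : rat) = (odd N)%:R.
Proof.
have E := odd_double_half N.+1; rewrite -addnn /= in E.
set h := (N.+1)./2 in E.
case oN: (odd N) => /=; rewrite oN /= in E.
- have hlt : (h < N.+2)%N by lia.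
  rewrite (bigD1 (Ordinal hlt)) //= big1 ?addr0.
    by have -> : (N.+1 - h == h)%N by apply/eqP; lia.
  move=> i /eqP ne.
  have ne' : (nat_of_ord i != h) by apply/eqP => e; apply: ne; apply: val_inj.
  have -> : (N.+1 - i == i)%N = false by apply/eqP; lia.
  by [].
- rewrite big1 // => i _.
  have -> : (N.+1 - i == i)%N = false by apply/eqP; lia.
  by [].
Qed.

Lemma baseD N :
  S N.+1%:R 0 N.+2 + 2 * S N.+1%:R 0 N.+1 - gbinom (N.+1%:R + 0 + 1) N.+2 = 0.
Proof.
have -> : S N.+1%:R 0 N.+2 = (-1) ^+ N.
  rewrite /S big_ord_recr /= big1 ?add0r.
    rewrite subnn gbinom0 mulr1.
    have -> : (N.+1%:R - N.+2%:R : rat) = -1 by rewrite -[(N.+2)%:R]natr1; ring.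
    by rewrite gbinomN1 !exprS mulrA mulrNN !mul1r.
  move=> i _.
  have hi : (i <= N.+1)%N by rewrite -ltnS.
  rewrite -natrB // add0r !gbinom_nat -natrM.
  have -> : ('C(N.+1 - i, i) * 'C(i, N.+2 - i))%N = 0%N; last by [].
  case: (ltnP i (N.+2 - i)) => h; first by rewrite [X in (_ * X)%N]bin_small // muln0.
  by rewrite bin_small //; lia.
have -> : S N.+1%:R 0 N.+1 = (odd N)%:R.
  rewrite /S -sum_half; apply: eq_bigr => i _.
  have hi : (i <= N.+1)%N by rewrite -ltnS.
  by rewrite -natrB // add0r !gbinom_nat -natrM binCC.
rewrite addr0 natr1 gbinom_nat binn.
rewrite -signr_odd; case: (odd N) => /=; rewrite ?expr1 ?expr0; ring.
Qed.

Lemma mainQ N : forall A B, S A B N.+1 + 2 * S A B N = gbinom (A + B + 1) N.+1.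
Proof.
elim: N => [|N IH] A B.
  rewrite /S !big_ord_recr !big_ord0 /= !subn0 !subnn !gbinom0 !gbinom1; ring.
pose D x y := S x y N.+2 + 2 * S x y N.+1 - gbinom (x + y + 1) N.+2.
have DB : forall x y, D x (y + 1) = D x y.
  move=> x y; rewrite /D R1 R1.
  have -> : x + (y + 1) + 1 = (x + y + 1) + 1 by ring.
  rewrite gbinom_pascal -IH; ring.
have DA : forall x y, D (x + 1) y = D x y.
  move=> x y; rewrite /D R2 R2.
  have -> : x + 1 + y + 1 = (x + y + 1) + 1 by ring.
  rewrite gbinom_pascal.
  have <- : x - 1 + (y + 1) + 1 = x + y + 1 by ring.
  rewrite -IH; ring.
have pfA : forall y, pf (fun x => D x y).
  move=> y; rewrite /D; apply: pf_add; first apply: pf_add.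
  - exact: pfS_A.
  - by apply: pf_mul; [exact: pf_cst | exact: pfS_A].
  - apply: pf_opp.
    by apply: pf_gbinom; do 2 (apply: pf_add; try exact: pf_cst); exact: pf_id.
have pfB : forall x, pf (fun y => D x y).
  move=> x; rewrite /D; apply: pf_add; first apply: pf_add.
  - exact: pfS_B.
  - by apply: pf_mul; [exact: pf_cst | exact: pfS_B].
  - apply: pf_opp.
    by apply: pf_gbinom; do 2 (apply: pf_add; try exact: pf_cst); exact: pf_id.
have : D A B = 0.
  rewrite (pf_periodic _ (pfA B) (DA^~ B) A N.+1%:R).
  rewrite (pf_periodic _ (pfB _) (DB _) B 0).
  exact: baseD.
rewrite /D => /eqP; rewrite subr_eq0 => /eqP.
by [].
Qed.

Lemma partii_gen n (c : nat -> rat) :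
  (forall k, c k + 2 * c k.+1 = ('C(n, k))%:R) -> c n.+1 = 0 ->
  ('X^n : {poly rat}) =
    (c 0%N)%:P + ('X + 1) * \sum_(1 <= k < n.+1) (c k)%:P * ('X - 1) ^+ (k - 1).
Proof.
move=> Hc Hn.
rewrite big_add1 /= big_mkord.
set t : {poly rat} := 'X - 1.
have eX : 'X = t + 1 by rewrite /t subrK.
rewrite eX exprD1n.
have -> : \sum_(i < n.+1) t ^+ i *+ 'C(n, i) =
   \sum_(i < n.+1) (c i)%:P * t ^+ i + \sum_(i < n.+1) (2 * c i.+1)%:P * t ^+ i.
  rewrite -big_split /=; apply: eq_bigr => i _.
  by rewrite -mulrDl -polyCD Hc polyC_natr mulr_natl.
rewrite big_ord_recl big_ord_recr /= Hn mulr0 polyC0 mul0r addr0 expr0 mulr1.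
rewrite -addrA; congr (_ + _).
rewrite -addrA mulrDl !big_distrr /= -!big_split /=; apply: eq_bigr => i _.
rewrite subn1 /bump /= add1n exprS polyCM polyC_natr; ring.
Qed.

Lemma lS n k : (k <= n)%N -> l n k = S ((n%:R - 1)/2) ((n%:R - 1)/2) (n - k).
Proof. by move=> h; rewrite /l /lsum h /S; apply: eq_bigr => i _; rewrite addr0 subr0. Qed.

Lemma l0 n k : (n < k)%N -> l n k = 0.
Proof. by move=> h; rewrite /l /lsum leqNgt h. Qed.

Lemma parti n k : ('C(n, k))%:R = l n k + 2 * l n k.+1.
Proof.
case: (ltngtP k n) => h.
- have e : (n - k = (n - k.+1).+1)%N by rewrite subnSK.
  rewrite (lS _ _ (ltnW h)) (lS _ _ h) e mainQ.
  have -> : (n%:R - 1) / 2 + (n%:R - 1) / 2 + 1 = (n%:R : rat) by field.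
  by rewrite gbinom_nat -e bin_sub // ltnW.
- by rewrite !l0 ?bin_small // ?mulr0 ?addr0 // ltnW.
- rewrite h (lS _ _ (leqnn n)) subnn l0 ?ltnSn // binn mulr0 addr0.
  by rewrite /S big_ord1 !gbinom0 mulr1.
Qed.

Theorem proposition4p7 :
  (forall n k : nat, ('C(n, k))%:R = l n k + 2 * l n k.+1) /\
  (forall n : nat,
     ('X^n : {poly rat}) =
       ((-1) ^+ n)%:P +
       ('X + 1) * \sum_(1 <= k < n.+1) (l n k)%:P * ('X - 1) ^+ (k - 1)).
Proof.
split; first exact: parti.
move=> n.
have E := partii_gen _ _ (fun k => esym (parti n k)) (l0 _ _ (ltnSn n)).
have H0 : l n 0 = (-1) ^+ n.
  have := congr1 (horner^~ (-1)) E.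
  rewrite /= hornerXn hornerD hornerC hornerM hornerD hornerX hornerC addNr mul0r addr0.
  by move=> ->.
by rewrite -H0.
Qed.
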